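(* Let $3\le n\le N$. For every $x$ at which all the functions $\Theta_n,\Lambda_n(\cdot;i,k)$ ($i,k\in\{1,2\}$) are defined at both $x+1$ and $x$ and $\Lambda_n(x+1;1,1)\neq0$, $$\widetilde{\mathcal F}_n(x)\,\Delta\nabla\mathbb K_n(x)+\widetilde{\mathcal G}_n(x)\,\Delta\mathbb K_n(x)+\widetilde{\mathcal H}_n(x)\,\mathbb K_n(x)=0,$$ where $\widetilde{\mathcal F}_n(x)=\mathcal F_n(x+1)$, $\widetilde{\mathcal G}_n(x)=\mathcal G_n(x+1)+\mathcal H_n(x+1)$, $\widetilde{\mathcal H}_n(x)=\mathcal H_n(x+1)$, and $\mathcal F_n(x)=\Theta_n(x)\Theta_n(x-1)$, $\mathcal G_n(x)=\Theta_n(x)\big(\nabla\Theta_n(x)+\Lambda_n(x-1;2,1)+\Lambda_n(x;1,2)\big)-\frac{\nabla\Lambda_n(x;1,1)\,(\Theta_n(x)+\Lambda_n(x;1,2))\Theta_n(x)}{\Lambda_n(x;1,1)}$, $\mathcal H_n(x)=\Theta_n(x)\nabla\Lambda_n(x;2,1)+\Lambda_n(x;1,2)\Lambda_n(x;2,1)-\frac{\nabla\Lambda_n(x;1,1)\,\Lambda_n(x;2,1)(\Theta_n(x)+\Lambda_n(x;1,2))}{\Lambda_n(x;1,1)}-\Lambda_n(x-1;1,1)\Lambda_n(x;2,2)$.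
   Context: Fix an integer $N\ge 1$ and $0<p<1$. Notation: $(a)_0=1$, $(a)_k=a(a+1)\cdots(a+k-1)$ (Pochhammer symbol); $[z]_0=1$, $[z]_k=z(z-1)\cdots(z-k+1)$ (falling factorial). For a function $f$, $\Delta f(x)=f(x+1)-f(x)$, $\nabla f(x)=f(x)-f(x-1)$, $\Delta^0$ is the identity and $\Delta^k=\Delta\circ\Delta^{k-1}$. For $0\le n\le N$ the monic Kravchuk polynomial is $K_n(x)=p^n(-N)_n\sum_{k=0}^{n}\frac{(-n)_k(-x)_k}{(-N)_k\,k!}p^{-k}$, and $K_{-1}=0$; these are monic of degree $n$ and orthogonal on $\{0,\dots,N\}$ with respect to the binomial weight $w(x)=\binom{N}{x}p^x(1-p)^{N-x}$, with $\|K_n\|^2=\sum_{x=0}^N K_n(x)^2w(x)=n!(-N)_np^n(p-1)^n$. They satisfy $xK_n=K_{n+1}+\alpha_nK_n+\beta_nK_{n-1}$ with $\alpha_n=p(N-n)+n(1-p)$, $\beta_n=np(1-p)(N-n+1)$. For $1\le n\le N+1$ and integers $i,l\ge0$, $\mathscr K_{n-1}^{(i,l)}(x,y)=\sum_{k=0}^{n-1}\frac{\Delta^iK_k(x)\,\Delta^lK_k(y)}{\|K_k\|^2}$. Fix $\lambda,\mu>0$ and an integer $j\ge 0$. On real polynomials define $\langle f,g\rangle_{\lambda,\mu}=\sum_{x=0}^N f(x)g(x)w(x)+\lambda\Delta^jf(0)\Delta^jg(0)+\mu\Delta^jf(N)\Delta^jg(N)$. For $0\le n\le N$, $\mathbb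 K_n=\mathbb K_n^{(j)}$ is the monic polynomial of degree $n$ with $\langle\mathbb K_n,q\rangle_{\lambda,\mu}=0$ for all polynomials $q$ of degree $<n$ (Kravchuk–Sobolev polynomials). For $1\le n\le N$: $\mathscr A_n(x,y)=\frac{j!}{\|K_{n-1}\|^2[x-y]_{j+1}}\sum_{k=0}^{j}\frac{\Delta^kK_{n-1}(y)}{k!}[x-y]_k$, $\mathscr B_n(x,y)=-\frac{j!}{\|K_{n-1}\|^2[x-y]_{j+1}}\sum_{k=0}^{j}\frac{\Delta^kK_{n}(y)}{k!}[x-y]_k$; $k_{00}=\mathscr K^{(j,j)}_{n-1}(0,0)$, $k_{0N}=\mathscr K^{(j,j)}_{n-1}(0,N)$, $k_{N0}=\mathscr K^{(j,j)}_{n-1}(N,0)$, $k_{NN}=\mathscr K^{(j,j)}_{n-1}(N,N)$, $d_0=\Delta^jK_n(0)$, $d_N=\Delta^jK_n(N)$, $\delta_n=(1+\lambda k_{00})(1+\mu k_{NN})-\lambda\mu k_{0N}k_{N0}$ (which is nonzero), $\Phi_1(n)=\frac{d_0(1+\mu k_{NN})-\mu k_{0N}d_N}{\delta_n}$, $\Phi_2(n)=\frac{(1+\lambda k_{00})d_N-\lambda k_{N0}d_0}{\delta_n}$; $\mathscr C_{1,n}(x)=1-\lambda\Phi_1(n)\mathscr A_n(x,0)-\mu\Phi_2(n)\mathscr A_n(x,N)$ and $\mathscr D_{1,n}(x)=-\lambda\Phi_1(n)\mathscr B_n(x,0)-\mu\Phi_2(n)\mathscr B_n(x,N)$. For $2\le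 m\le N$ define $\mathscr E_{1,m}(x)=x\nabla\mathscr C_{1,m}(x)+m\,\mathscr C_{1,m}(x-1)-\frac{(m-1)p(N-m+2)\mathscr D_{1,m}(x-1)}{\beta_{m-1}}$ and $\mathscr F_{1,m}(x)=x\nabla\mathscr D_{1,m}(x)+mp(N-m+1)\mathscr C_{1,m}(x-1)+\frac{(m-1)p(N-m+2)(x-\alpha_{m-1})\mathscr D_{1,m}(x-1)}{\beta_{m-1}}+(m-1)\mathscr D_{1,m}(x-1)$. For $3\le n\le N$ define $\mathscr C_{2,n}(x)=-\frac{\mathscr D_{1,n-1}(x)}{\beta_{n-1}}$, $\mathscr D_{2,n}(x)=\mathscr C_{1,n-1}(x)+\mathscr C_{2,n}(x)(\alpha_{n-1}-x)$, $\mathscr E_{2,n}(x)=-\frac{\mathscr F_{1,n-1}(x)}{\beta_{n-1}}$, $\mathscr F_{2,n}(x)=\mathscr E_{1,n-1}(x)+\mathscr E_{2,n}(x)(\alpha_{n-1}-x)$, and $\Theta_n(x)=x\big(\mathscr C_{1,n}(x)\mathscr D_{2,n}(x)-\mathscr C_{2,n}(x)\mathscr D_{1,n}(x)\big)$, $\Lambda_n(x;i,k)=(-1)^k\big(\mathscr E_{k,n}(x)\mathscr D_{i,n}(x)-\mathscr F_{k,n}(x)\mathscr C_{i,n}(x)\big)$ for $i,k\in\{1,2\}$. *)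

(* Defs.v *)
From HB Require Import structures.
From mathcomp Require Import all_boot all_order all_algebra.
Set Implicit Arguments. Unset Strict Implicit. Unset Printing Implicit Defensive.
Import Order.TTheory GRing.Theory Num.Theory.
Local Open Scope ring_scope.

Section KS.
Variables (R : realFieldType) (N : nat) (p lam mu : R) (j : nat).

Definition NR : R := N%:R.

Definition poch (a : R) (k : nat) : R := \prod_(i < k) (a + i%:R).
Definition ffall (z : R) (k : nat) : R := \prod_(i < k) (z - i%:R).

Definition fdiff (f : R -> R) : R -> R := fun x => f (x + 1) - f x.
Definition bdiff (f : R -> R) : R -> R := fun x => f x - f (x - 1).
Definition fdiffn (k : nat) (f : R -> R) : R -> R := iter k fdiff f.

(* monic Kravchuk polynomial K_n(x) *)
Definition Kr (n : nat) (x : R) : R :=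
  p ^+ n * poch (- NR) n *
  \sum_(k < n.+1) (poch (- n%:R) k * poch (- x) k / (poch (- NR) k * k`!%:R) * p ^- k).

Definition wt (x : nat) : R := 'C(N, x)%:R * p ^+ x * (1 - p) ^+ (N - x).

Definition normK (n : nat) : R := \sum_(x < N.+1) (Kr n x%:R) ^+ 2 * wt x.

Definition alpha (n : nat) : R := p * (NR - n%:R) + n%:R * (1 - p).
Definition beta (n : nat) : R := n%:R * p * (1 - p) * (NR - n%:R + 1).

(* scrK n i l x y = \mathscr K_{n-1}^{(i,l)}(x,y) *)
Definition scrK (n i l : nat) (x y : R) : R :=
  \sum_(k < n) fdiffn i (Kr k) x * fdiffn l (Kr k) y / normK k.

Definition sob (f g : {poly R}) : R :=
  \sum_(x < N.+1) f.[x%:R] * g.[x%:R] * wt x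
  + lam * fdiffn j (horner f) 0 * fdiffn j (horner g) 0
  + mu * fdiffn j (horner f) NR * fdiffn j (horner g) NR.

Definition isKS (n : nat) (P : {poly R}) : Prop :=
  P \is monic /\ size P = n.+1 /\
  forall q : {poly R}, (size q <= n)%N -> sob P q = 0.

Definition scrA (n : nat) (x y : R) : R :=
  j`!%:R / (normK n.-1 * ffall (x - y) j.+1) *
  \sum_(k < j.+1) fdiffn k (Kr n.-1) y / k`!%:R * ffall (x - y) k.

Definition scrB (n : nat) (x y : R) : R :=
  - (j`!%:R / (normK n.-1 * ffall (x - y) j.+1)) *
  \sum_(k < j.+1) fdiffn k (Kr n) y / k`!%:R * ffall (x - y) k.

Definition k00 (n : nat) : R := scrK n j j 0 0.
Definition k0N (n : nat) : R := scrK n j j 0 NR.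
Definition kN0 (n : nat) : R := scrK n j j NR 0.
Definition kNN (n : nat) : R := scrK n j j NR NR.
Definition d0 (n : nat) : R := fdiffn j (Kr n) 0.
Definition dN (n : nat) : R := fdiffn j (Kr n) NR.

Definition deltaS (n : nat) : R :=
  (1 + lam * k00 n) * (1 + mu * kNN n) - lam * mu * k0N n * kN0 n.
Definition Phi1 (n : nat) : R :=
  (d0 n * (1 + mu * kNN n) - mu * k0N n * dN n) / deltaS n.
Definition Phi2 (n : nat) : R :=
  ((1 + lam * k00 n) * dN n - lam * kN0 n * d0 n) / deltaS n.

Definition C1 (n : nat) (x : R) : R :=
  1 - lam * Phi1 n * scrA n x 0 - mu * Phi2 n * scrA n x NR.
Definition D1 (n : nat) (x : R) : R :=
  - lam * Phi1 n * scrB n x 0 - mu * Phi2 n * scrB n x NR.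

Definition E1 (m : nat) (x : R) : R :=
  x * bdiff (C1 m) x + m%:R * C1 m (x - 1)
  - (m%:R - 1) * p * (NR - m%:R + 2) * D1 m (x - 1) / beta m.-1.
Definition F1 (m : nat) (x : R) : R :=
  x * bdiff (D1 m) x + m%:R * p * (NR - m%:R + 1) * C1 m (x - 1)
  + (m%:R - 1) * p * (NR - m%:R + 2) * (x - alpha m.-1) * D1 m (x - 1) / beta m.-1
  + (m%:R - 1) * D1 m (x - 1).

Definition C2 (n : nat) (x : R) : R := - (D1 n.-1 x / beta n.-1).
Definition D2 (n : nat) (x : R) : R := C1 n.-1 x + C2 n x * (alpha n.-1 - x).
Definition E2 (n : nat) (x : R) : R := - (F1 n.-1 x / beta n.-1).
Definition F2 (n : nat) (x : R) : R := E1 n.-1 x + E2 n x * (alpha n.-1 - x).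

Definition Theta (n : nat) (x : R) : R :=
  x * (C1 n x * D2 n x - C2 n x * D1 n x).

Definition Ci (i n : nat) := if i == 1%N then C1 n else C2 n.
Definition Di (i n : nat) := if i == 1%N then D1 n else D2 n.
Definition Ei (i n : nat) := if i == 1%N then E1 n else E2 n.
Definition Fi (i n : nat) := if i == 1%N then F1 n else F2 n.

Definition Lam (n : nat) (x : R) (i k : nat) : R :=
  (-1) ^+ k * (Ei k n x * Di i n x - Fi k n x * Ci i n x).

Definition Fcal (n : nat) (x : R) : R := Theta n x * Theta n (x - 1).
Definition Gcal (n : nat) (x : R) : R :=
  Theta n x * (bdiff (Theta n) x + Lam n (x - 1) 2 1 + Lam n x 1 2)
  - bdiff (fun t => Lam n t 1 1) x * (Theta n x + Lam n x 1 2) * Theta n x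
    / Lam n x 1 1.
Definition Hcal (n : nat) (x : R) : R :=
  Theta n x * bdiff (fun t => Lam n t 2 1) x + Lam n x 1 2 * Lam n x 2 1
  - bdiff (fun t => Lam n t 1 1) x * Lam n x 2 1 * (Theta n x + Lam n x 1 2)
    / Lam n x 1 1
  - Lam n (x - 1) 1 1 * Lam n x 2 2.

Definition Ftil (n : nat) (x : R) : R := Fcal n (x + 1).
Definition Gtil (n : nat) (x : R) : R := Gcal n (x + 1) + Hcal n (x + 1).
Definition Htil (n : nat) (x : R) : R := Hcal n (x + 1).

(* The only non-constant denominators in the building blocks are the
   falling factorials [t - 0]_{j+1} and [t - N]_{j+1}. *)
Definition nonpole (t : R) : Prop :=
  ffall (t - 0) j.+1 != 0 /\ ffall (t - NR) j.+1 != 0.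
(* Theta_n(t) only evaluates A_m, B_m at t; Lambda_n(t;i,k) at t and t-1. *)
Definition Theta_defined (t : R) : Prop := nonpole t.
Definition Lam_defined (t : R) : Prop := nonpole t /\ nonpole (t - 1).

End KS.

(* Main.v *)
Require Import Defs.
From HB Require Import structures.
From mathcomp Require Import all_boot all_order all_algebra ring lra zify.
Import Order.TTheory GRing.Theory Num.Theory.
Local Open Scope ring_scope.
Set Implicit Arguments. Unset Strict Implicit. Unset Printing Implicit Defensive.



Lemma final_alg (R : fieldType) (T T' A B Cc Dd a' b' Pt u v q q' : R) : A != 0 ->
  T * u = - B * Pt + A * q ->
  T' * v = - b' * (Pt - u) + a' * q' ->
  T * (q - q') = Dd * Pt - Cc * q ->
  T * T' * (u - v)
  + ((T * (T - T' + b' + Cc) - (A - a') * (T + Cc) * T / A)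
     + (T * (B - b') + Cc * B - (A - a') * B * (T + Cc) / A - a' * Dd)) * u
  + (T * (B - b') + Cc * B - (A - a') * B * (T + Cc) / A - a' * Dd) * (Pt - u) = 0.
Proof.
move=> hA e1 e2 e3.
have eq : q = (T * u + B * Pt) / A by rewrite e1; field.
have eq' : T * q' = T * q - Dd * Pt + Cc * q.
  rewrite (_ : T * q' = T * q - T * (q - q')); last by ring.
  by rewrite e3; ring.
have ev : T * (T' * v) = T * (- b' * (Pt - u) + a' * q') by rewrite e2.
rewrite (_ : T * T' * (u - v) = T * T' * u - T * (T' * v)); last by ring.
rewrite ev (_ : T * (- b' * (Pt - u) + a' * q') = T * (- b' * (Pt - u)) + a' * (T * q')); last by ring.
rewrite eq' eq; field; exact: hA.
Qed.

Section KrSec.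
Variables (R : realFieldType) (N : nat) (p : R).
Hypotheses (p0 : 0 < p) (p1 : p < 1).

Local Notation K := (Kr N p).
Local Notation NN := (N%:R : R).

Lemma pochS (a : R) k : poch a k.+1 = poch a k * (a + k%:R).
Proof. by rewrite /poch big_ord_recr. Qed.

Lemma pochSl (a : R) k : poch a k.+1 = a * poch (a + 1) k.
Proof.
rewrite /poch big_ord_recl /= addr0; congr (_ * _); apply: eq_bigr => i _.
by rewrite -addrA nat1r.
Qed.

Lemma poch0 (a : R) : poch a 0 = 1.
Proof. by rewrite /poch big_ord0. Qed.

Lemma poch_negz (m k : nat) : (m < k)%N -> poch (- m%:R : R) k = 0.
Proof.
move=> H; rewrite /poch (bigD1 (Ordinal H)) //= addNr mul0r //.
Qed.

Lemma poch_negN_neq0 k : (k <= N)%N -> poch (- NN) k != 0.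
Proof.
move=> H; apply/prodf_neq0 => i _.
rewrite addrC subr_eq0 eqr_nat; apply/negP => /eqP E.
move: (ltn_ord i); lia.
Qed.

Lemma fact_neq0 k : (k`!%:R : R) != 0.
Proof. by rewrite pnatr_eq0 -lt0n fact_gt0. Qed.

Ltac neqt := rewrite ?nat1r ?natr1; repeat (apply/andP; split);
  rewrite ?expf_neq0 ?mulf_neq0 ?invr_neq0 ?fact_neq0 ?pnatr_eq0 //; try assumption.

Definition cK (m k : nat) : R :=
  p ^+ m * poch (- NN) m * (poch (- m%:R) k / (poch (- NN) k * k`!%:R) * p ^- k).

Lemma Kr_sum m t : K m t = \sum_(k < m.+1) cK m k * poch (- t) k.
Proof.
rewrite /Kr /NR mulr_sumr; apply: eq_bigr => k _; rewrite /cK.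
ring.
Qed.

Lemma cK_zero m k : (m < k)%N -> cK m k = 0.
Proof. by move=> H; rewrite /cK poch_negz // !(mul0r, mulr0). Qed.

Lemma poch_nabla (t : R) k :
  t * (poch (- t) k - poch (- (t - 1)) k) = k%:R * poch (- t) k.
Proof.
case: k => [|k]; first by rewrite !poch0 subrr mulr0 mul0r.
rewrite pochSl pochS (_ : - (t - 1) = - t + 1); last by ring.
rewrite -natr1; ring.
Qed.

Lemma poch_mulx (t : R) k :
  t * poch (- t) k = k%:R * poch (- t) k - poch (- t) k.+1.
Proof. rewrite pochS; ring. Qed.

Definition Lop (f : R -> R) (t : R) : R :=
  p * (NN - t) * (f (t + 1) - f t) - (1 - p) * t * (f t - f (t - 1)).

Lemma Lop_poch (t : R) k :
  Lop (fun s => poch (- s) k) t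
  = - (k%:R * poch (- t) k) - k%:R * p * (NN - k%:R + 1) * poch (- t) k.-1.
Proof.
rewrite /Lop.
have H := poch_nabla t k.
have -> : (1 - p) * t * (poch (- t) k - poch (- (t - 1)) k)
   = (1 - p) * (t * (poch (- t) k - poch (- (t - 1)) k)) by ring.
rewrite H.
case: k H => [|k] H; first by rewrite !poch0; ring.
rewrite pochSl (_ : - (t + 1) + 1 = - t); last by ring.
rewrite /= pochS -natr1; ring.
Qed.

Lemma Lop_sum (f : R -> R) n (g : nat -> R) (h : nat -> R -> R) t :
  (forall s, f s = \sum_(k < n) g k * h k s) ->
  Lop f t = \sum_(k < n) g k * Lop (h k) t.
Proof.
move=> E; rewrite /Lop !E -!sumrB !mulr_sumr -sumrB.
by apply: eq_bigr => k _; ring.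
Qed.


Lemma pochN_key m k :
  poch (- m.+1%:R : R) k * (k%:R - m.+1%:R) = - m.+1%:R * poch (- m%:R) k.
Proof.
have := pochS (- m.+1%:R : R) k; rewrite pochSl => E.
rewrite (_ : - m.+1%:R + 1 = - m%:R :> R) in E; last by rewrite -natr1; ring.
by rewrite addrC -E.
Qed.

Lemma cK_struct m k :
  (k%:R - m.+1%:R) * cK m.+1 k = m.+1%:R * p * (NN - m.+1%:R + 1) * cK m k.
Proof.
rewrite /cK pochS.
transitivity ((poch (- m.+1%:R : R) k * (k%:R - m.+1%:R)) *
  (p ^+ m.+1 * poch (- NN) m * (- NN + m%:R) / (poch (- NN) k * k`!%:R) * p ^- k)).
  by ring.
rewrite pochN_key exprS -natr1; ring.
Qed.

Lemma cK_eig m k : (k < N)%N ->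
  k.+1%:R * p * (NN - k%:R) * cK m k.+1 = (m%:R - k%:R) * cK m k.
Proof.
move=> kN; rewrite /cK !pochS factS natrM exprS.
have h1 := poch_negN_neq0 (ltnW kN).
have h2 : (- NN + k%:R) != 0.
  by rewrite addrC subr_eq0 eqr_nat; apply/negP => /eqP E; move: kN; rewrite E ltnn.
have h3 := fact_neq0 k.
have h4 : p != 0 by rewrite gt_eqF.
have h5 : (k.+1%:R : R) != 0 by rewrite pnatr_eq0.
field; neqt.
Qed.

Lemma cK_top m : (m < N)%N -> cK m.+1 m.+1 = - cK m m.
Proof.
move=> mN; rewrite /cK.
have h1 := poch_negN_neq0 (ltnW mN).
have h1' := poch_negN_neq0 mN.
have h3 := fact_neq0 m.
have h4 : p != 0 by rewrite gt_eqF.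
have h5 : (m.+1%:R : R) != 0 by rewrite pnatr_eq0.
rewrite [in poch (- m.+1%:R) _]pochSl (_ : - m.+1%:R + 1 = - m%:R :> R); last by rewrite -natr1; ring.
rewrite factS natrM exprS.
field; neqt.
Qed.

Definition cprev (m k : nat) : R := if k is k'.+1 then cK m k' else 0.

Lemma natr_sub_neq0 (a b : nat) : a <> b -> (a%:R - b%:R : R) != 0.
Proof. by move=> H; rewrite subr_eq0 eqr_nat; apply/eqP. Qed.

Lemma cK_rec m k : (1 <= m)%N -> (m < N)%N -> (k <= m)%N ->
  k%:R * cK m k - cprev m k
  = cK m.+1 k + alpha N p m * cK m k + beta N p m * cK m.-1 k.
Proof.
case: m => [//|m] _ mN km.
have hp : p != 0 by rewrite gt_eqF.
have hk1 : (k%:R - m.+2%:R : R) != 0 by apply: natr_sub_neq0; lia.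
have hNm : (NN - m.+1%:R + 1) != 0.
  by rewrite -natrB ?natr1 ?pnatr_eq0 //; lia.
have ha : (m.+1%:R * p * (NN - m.+1%:R + 1)) != 0 by rewrite !mulf_neq0 ?pnatr_eq0.
have E1 : cK m.+2 k = m.+2%:R * p * (NN - m.+2%:R + 1) * cK m.+1 k / (k%:R - m.+2%:R).
  by rewrite -cK_struct mulrC mulKf.
have E2 : cK m k = (k%:R - m.+1%:R) * cK m.+1 k / (m.+1%:R * p * (NN - m.+1%:R + 1)).
  by rewrite cK_struct mulrC mulKf.
have E3 : cprev m.+1 k = k%:R * p * (NN - k%:R + 1) * cK m.+1 k / (m.+1%:R - k%:R + 1).
  case: k km {hk1 E1 E2} => [|k] km; first by rewrite /= !mul0r.
  rewrite /= (_ : NN - k.+1%:R + 1 = NN - k%:R); last by rewrite -natr1; ring.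
  rewrite (_ : m.+1%:R - k.+1%:R + 1 = m.+1%:R - k%:R :> R); last by rewrite -[k.+1%:R]natr1; ring.
  have hmk : (m.+1%:R - k%:R : R) != 0 by apply: natr_sub_neq0; lia.
  by rewrite cK_eig; [rewrite mulrC mulKf | lia].
rewrite E1 E2 E3 /= /alpha /beta /NR.
have hd : (m.+1%:R - k%:R + 1 : R) != 0.
  by rewrite -natrB ?natr1 ?pnatr_eq0 //; lia.
move: hk1 hNm hd; rewrite -!natr1 => hk1 hNm hd.
field; by rewrite hNm hp hk1 hd natr1 pnatr_eq0.
Qed.

Lemma Kr_ext m M t : (m < M)%N -> K m t = \sum_(k < M) cK m k * poch (- t) k.
Proof.
elim: M => [//|M IH] H.
case: (ltngtP m M) => H'.
- by rewrite big_ord_recr /= -IH // cK_zero // mul0r addr0.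
- lia.
- by subst; rewrite Kr_sum.
Qed.

Lemma Kr_struct m t :
  t * (K m.+1 t - K m.+1 (t - 1))
  = m.+1%:R * K m.+1 t + m.+1%:R * p * (NN - m.+1%:R + 1) * K m t.
Proof.
rewrite !Kr_sum -sumrB mulr_sumr.
transitivity (\sum_(k < m.+2) k%:R * cK m.+1 k * poch (- t) k).
  by apply: eq_bigr => k _; rewrite -mulrBr mulrCA poch_nabla; ring.
rewrite !mulr_sumr big_ord_recr /= [X in _ = X + _]big_ord_recr /=.
rewrite -addrA [_ * (_ * _) + _]addrC addrA -big_split /=; congr (_ + _); last by ring.
apply: eq_bigr => k _.
have H := cK_struct m k.
rewrite (_ : k%:R * cK m.+1 k = m.+1%:R * cK m.+1 k + (k%:R - m.+1%:R) * cK m.+1 k); last by ring.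
rewrite H; ring.
Qed.

Lemma Kr_eig m t : (m <= N)%N -> Lop (K m) t = - m%:R * K m t.
Proof.
move=> mN.
rewrite (@Lop_sum _ m.+1 (cK m) (fun k s => poch (- s) k)) => [|s]; last exact: Kr_sum.
under eq_bigr do rewrite Lop_poch.
transitivity (\sum_(k < m.+1) - (k%:R * cK m k * poch (- t) k)
   - \sum_(k < m.+1) k%:R * p * (NN - k%:R + 1) * cK m k * poch (- t) k.-1).
  by rewrite -sumrB; apply: eq_bigr => k _; ring.
rewrite [X in _ - X = _]big_ord_recl /= !mul0r add0r.
rewrite big_ord_recr /= Kr_sum big_ord_recr /= mulrDr.
rewrite addrAC; congr (_ + _); last by ring.
rewrite mulr_sumr -sumrB; apply: eq_bigr => i _.
rewrite (_ : NN - (bump 0 i)%:R + 1 = NN - i%:R); last by rewrite /bump /= add1n -natr1; ring.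
have H := @cK_eig m i (leq_trans (ltn_ord i) mN).
rewrite /bump /= add1n.
rewrite (_ : i.+1%:R * p * (NN - i%:R) * cK m i.+1 * poch (- t) i
   = (i.+1%:R * p * (NN - i%:R) * cK m i.+1) * poch (- t) i); last by [].
rewrite H; ring.
Qed.

Lemma Kr0 t : K 0 t = 1.
Proof. by rewrite Kr_sum big_ord1 /cK !poch0 !expr0 /= fact0 !(mul1r, mulr1, invr1, divr1). Qed.

Lemma Kr_rec m t : (m < N)%N ->
  t * K m t = K m.+1 t + alpha N p m * K m t + beta N p m * K m.-1 t.
Proof.
case: m => [|m] mN.
  rewrite /beta /alpha /= !mul0r !Kr0 Kr_sum !big_ord_recr big_ord0 /= add0r /cK.
  rewrite !poch0 !pochS !poch0 /= /NR fact0.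
  have f1 : (1`!%:R : R) = 1 by [].
  have hN : (NN) != 0 by rewrite pnatr_eq0 -lt0n.
  have hp : p != 0 by rewrite gt_eqF.
  rewrite f1; field.
  by rewrite hN hp.
have e1 := @Kr_ext m.+1 m.+3 t (ltnW (ltnSn _)).
have e2 := @Kr_ext m m.+3 t (ltnW (ltnW (ltnSn _))).
rewrite e1 e2 /= Kr_sum.
set s := \sum_(k < m.+3) _.
transitivity (\sum_(k < m.+3) (k%:R * cK m.+1 k - cprev m.+1 k) * poch (- t) k).
  rewrite /s {s e1 e2} mulr_sumr.
  transitivity (\sum_(k < m.+3) k%:R * cK m.+1 k * poch (- t) k
     - \sum_(k < m.+3) cprev m.+1 k * poch (- t) k); last first.
    by rewrite -sumrB; apply: eq_bigr => k _; ring.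
  rewrite [X in _ = _ - X]big_ord_recl /= mul0r add0r.
  under eq_bigr do rewrite mulrCA poch_mulx mulrBr.
  rewrite sumrB; congr (_ - _); first by apply: eq_bigr => k _; ring.
  by rewrite big_ord_recr /= cK_zero // mul0r addr0.
rewrite !mulr_sumr -!big_split /=; apply: eq_bigr => k _.
have [km|] := leqP k m.+1.
  by rewrite cK_rec //; ring.
move=> H; have -> : (k : nat) = m.+2 by move: (ltn_ord k) H; lia.
rewrite /cprev /= (cK_top mN) (@cK_zero m.+1 m.+2) // (@cK_zero m m.+2) //; ring.
Qed.

Local Notation w := (wt N p).

Lemma wt_shift x : (x < N)%N ->
  p * (NN - x%:R) * w x = (1 - p) * x.+1%:R * w x.+1.
Proof.
move=> xN.
have E : ((N - x) * 'C(N, x))%N = (x.+1 * 'C(N, x.+1))%N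
  by rewrite -mul_bin_down mul_bin_diag.
rewrite /wt -natrB; last by lia.
have E2 : (N - x = (N - x.+1).+1)%N by lia.
rewrite E2 in E *; rewrite exprS [p ^+ x.+1]exprS.
transitivity (p * (1 - p) * p ^+ x * (1 - p) ^+ (N - x.+1) * (((N - x.+1).+1)%:R * 'C(N, x)%:R)).
  by ring.
rewrite -natrM E natrM; ring.
Qed.

Lemma Lop_sym (f g : R -> R) :
  \sum_(x < N.+1) Lop f x%:R * g x%:R * w x
  = \sum_(x < N) - ((1 - p) * x.+1%:R * w x.+1 * (f x.+1%:R - f x%:R) * (g x.+1%:R - g x%:R)).
Proof.
rewrite /Lop.
transitivity (\sum_(x < N.+1) p * (NN - x%:R) * (f (x%:R + 1) - f x%:R) * g x%:R * w x
   - \sum_(x < N.+1) (1 - p) * x%:R * (f x%:R - f (x%:R - 1)) * g x%:R * w x).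
  by rewrite -sumrB; apply: eq_bigr => x _; ring.
rewrite big_ord_recr /= subrr !(mulr0, mul0r) addr0.
rewrite big_ord_recl /= !(mulr0, mul0r) add0r -sumrB.
apply: eq_bigr => x _.
rewrite /bump /= add1n natr1.
rewrite (_ : x.+1%:R - 1 = x%:R :> R); last by rewrite -natr1; ring.
have H := wt_shift (ltn_ord x).
transitivity ((p * (NN - x%:R) * w x) * (f x.+1%:R - f x%:R) * g x%:R
  - (1 - p) * x.+1%:R * (f x.+1%:R - f x%:R) * g x.+1%:R * w x.+1); first by ring.
rewrite H; ring.
Qed.

Lemma Kr_orth a b : (a <= N)%N -> (b <= N)%N -> a != b ->
  \sum_(x < N.+1) K a x%:R * K b x%:R * w x = 0.
Proof.
move=> aN bN ab.
have Ha : \sum_(x < N.+1) Lop (K a) x%:R * K b x%:R * w x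
   = - a%:R * \sum_(x < N.+1) K a x%:R * K b x%:R * w x.
  by rewrite mulr_sumr; apply: eq_bigr => x _; rewrite Kr_eig //; ring.
have Hb : \sum_(x < N.+1) Lop (K b) x%:R * K a x%:R * w x
   = - b%:R * \sum_(x < N.+1) K a x%:R * K b x%:R * w x.
  by rewrite mulr_sumr; apply: eq_bigr => x _; rewrite Kr_eig //; ring.
have E : \sum_(x < N.+1) Lop (K a) x%:R * K b x%:R * w x
  = \sum_(x < N.+1) Lop (K b) x%:R * K a x%:R * w x.
  by rewrite !Lop_sym; apply: eq_bigr => x _; ring.
rewrite Ha Hb in E.
have hab : (a%:R - b%:R : R) != 0 by apply: natr_sub_neq0 => H; rewrite H eqxx in ab.
apply: (mulfI hab); rewrite mulr0.
by apply/eqP; rewrite mulrBl subr_eq0 -eqr_opp -!mulNr E.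
Qed.

Lemma normK0 : normK N p 0 = 1.
Proof.
rewrite /normK; under eq_bigr do rewrite Kr0 expr1n mul1r.
rewrite /wt.
transitivity ((1 - p + p) ^+ N); last by rewrite subrK expr1n.
rewrite exprDn; apply: eq_bigr => i _; rewrite -mulr_natl; ring.
Qed.

Lemma sum3 (F G H : 'I_N.+1 -> R) a b :
  \sum_(x < N.+1) (F x + a * G x + b * H x)
  = \sum_(x < N.+1) F x + a * \sum_(x < N.+1) G x + b * \sum_(x < N.+1) H x.
Proof. by rewrite !big_split /= !mulr_sumr. Qed.

Lemma normK_rec m : (m.+1 < N)%N -> normK N p m.+1 = beta N p m.+1 * normK N p m.
Proof.
move=> mN.
set T := \sum_(x < N.+1) x%:R * K m.+1 x%:R * K m x%:R * w x.
have T1 : T = normK N p m.+1.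
  rewrite /T /normK.
  transitivity (\sum_(x < N.+1) (K m.+1 x%:R * K m.+1 x%:R * w x
     + alpha N p m * (K m.+1 x%:R * K m x%:R * w x)
     + beta N p m * (K m.+1 x%:R * K m.-1 x%:R * w x))).
    apply: eq_bigr => x _.
    rewrite (_ : x%:R * K m.+1 x%:R * K m x%:R * w x
       = K m.+1 x%:R * (x%:R * K m x%:R) * w x); last by ring.
    rewrite Kr_rec; [ring | lia].
  rewrite sum3 (@Kr_orth m.+1 m) ?(@Kr_orth m.+1 m.-1); try lia.
  - rewrite !mulr0 !addr0; apply: eq_bigr => x _; ring.
have T2 : T = beta N p m.+1 * normK N p m.
  rewrite /T /normK.
  transitivity (\sum_(x < N.+1) (K m.+2 x%:R * K m x%:R * w x
     + alpha N p m.+1 * (K m.+1 x%:R * K m x%:R * w x)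
     + beta N p m.+1 * (K m x%:R * K m x%:R * w x))).
    apply: eq_bigr => x _.
    rewrite Kr_rec //; ring.
  rewrite sum3 (@Kr_orth m.+2 m) ?(@Kr_orth m.+1 m); try lia.
  - rewrite mulr0 !add0r; congr (_ * _); apply: eq_bigr => x _; ring.
by rewrite -T1 T2.
Qed.

Lemma beta_gt0 m : (0 < m)%N -> (m <= N)%N -> 0 < beta N p m.
Proof.
move=> m0 mN; rewrite /beta /NR.
rewrite -natrB // natr1 !mulr_gt0 ?ltr0n ?subr_gt0 //; lia.
Qed.

Lemma normK_gt0 m : (m < N)%N -> 0 < normK N p m.
Proof.
elim: m => [|m IH] mN; first by rewrite normK0.
rewrite normK_rec // mulr_gt0 ?IH ?beta_gt0 //; lia.
Qed.

Fixpoint KPa (m : nat) : {poly R} * {poly R} :=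
  if m is m'.+1 then
    (('X - (alpha N p m')%:P) * (KPa m').1 - (beta N p m')%:P * (KPa m').2, (KPa m').1)
  else (1, 0).
Definition KP m := (KPa m).1.

Lemma KP_horner_aux m t : (m <= N)%N ->
  (KP m).[t] = K m t /\ beta N p m * (KPa m).2.[t] = beta N p m * K m.-1 t.
Proof.
elim: m => [|m IH] mN.
  by rewrite /KP /= hornerC Kr0 /beta !mul0r.
have [IH1 IH2] := IH (ltnW mN).
split; last by rewrite /KP /= IH1.
rewrite /KP /= hornerD hornerN !hornerM hornerXsubC !hornerC.
rewrite -/(KP m) IH1 IH2.
have := Kr_rec t mN; rewrite /= => E.
rewrite (_ : K m.+1 t = t * K m t - alpha N p m * K m t - beta N p m * K m.-1 t); last by rewrite E; ring.
ring.
Qed.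

Lemma KP_horner m t : (m <= N)%N -> (KP m).[t] = K m t.
Proof. by move=> H; case: (KP_horner_aux t H). Qed.

Lemma KP_monic m : KP m \is monic /\ size (KP m) = m.+1 /\ (size (KPa m).2 <= m)%N.
Proof.
elim: m => [|m [IH1 [IH2 IH3]]].
  by rewrite /KP /= monic1 size_poly1 size_poly0.
rewrite /KP /= -/(KP m).
have s1 : size (('X - (alpha N p m)%:P) * KP m) = m.+2.
  by rewrite size_monicM ?monicXsubC ?monic_neq0 // size_XsubC IH2.
have m1 : ('X - (alpha N p m)%:P) * KP m \is monic by rewrite monicMl ?monicXsubC.
have s2 : (size (- ((beta N p m)%:P * (KPa m).2))%R < m.+2)%N.
  rewrite size_polyN mul_polyC (leq_ltn_trans (size_scale_leq _ _)) //.
  by apply: (leq_ltn_trans IH3).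
split; last split; last by rewrite IH2.
- by rewrite monicE lead_coefDl ?s1 // -monicE.
- by rewrite size_polyDl s1.
Qed.

Lemma KP_coef m i : (m <= i)%N -> (KP m)`_i = (i == m)%:R.
Proof.
move=> H; have [M [S _]] := KP_monic m.
case: (ltngtP m i) H => // H _.
- by rewrite nth_default ?S.
- by subst; move/monicP: M; rewrite lead_coefE S.
Qed.

Lemma KP_basis m (q : {poly R}) : (m <= N.+1)%N -> (size q <= m)%N ->
  exists a : nat -> R, forall t, q.[t] = \sum_(k < m) a k * K k t.
Proof.
elim: m q => [|m IH] q mN sq.
  exists (fun _ => 0) => t; move: sq; rewrite leqn0 size_poly_eq0 => /eqP ->.
  by rewrite horner0 big_ord0.
set c := q`_m.
have sq' : (size (q - c *: KP m)%R <= m)%N.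
  apply/leq_sizeP => i mi; rewrite coefB coefZ KP_coef //.
  case: (ltngtP m i) mi => // H _.
  - rewrite nth_default; last by apply: (leq_trans sq).
    by rewrite mulr0 subr0.
  - by subst; rewrite mulr1 subrr.
have [a Ha] := IH _ (ltnW mN) sq'.
exists (fun k => if k == m then c else a k) => t.
rewrite big_ord_recr /= eqxx.
rewrite (_ : q = (q - c *: KP m) + c *: KP m); last by rewrite subrK.
rewrite hornerD hornerZ Ha KP_horner //; congr (_ + _).
apply: eq_bigr => i _.
by rewrite (ltn_eqF (ltn_ord i)).
Qed.

Lemma fdiffnS k (f : R -> R) x : fdiffn k.+1 f x = fdiffn k f (x + 1) - fdiffn k f x.
Proof. by []. Qed.

Lemma fdiffn0 (f : R -> R) x : fdiffn 0 f x = f x.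
Proof. by []. Qed.

Lemma fdiffn_ext k (f g : R -> R) : (forall x, f x = g x) -> forall x, fdiffn k f x = fdiffn k g x.
Proof. by move=> H; elim: k => [|k IH] x; rewrite ?fdiffn0 ?H // !fdiffnS !IH. Qed.

Lemma scrK_S1 n i l x y : scrK N p n i.+1 l x y = scrK N p n i l (x + 1) y - scrK N p n i l x y.
Proof. by rewrite /scrK -sumrB; apply: eq_bigr => k _; rewrite fdiffnS; ring. Qed.

Lemma scrK_S2 n i l x y : scrK N p n i l.+1 x y = scrK N p n i l x (y + 1) - scrK N p n i l x y.
Proof. by rewrite /scrK -sumrB; apply: eq_bigr => k _; rewrite fdiffnS; ring. Qed.

Lemma fdiffn_comb n l k (g : R -> R) c1 c2 y1 y2 x :
  fdiffn k (fun t => g t - c1 * scrK N p n 0 l t y1 - c2 * scrK N p n 0 l t y2) x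
  = fdiffn k g x - c1 * scrK N p n k l x y1 - c2 * scrK N p n k l x y2.
Proof.
elim: k x => [|k IH] x //.
by rewrite fdiffnS !IH fdiffnS !scrK_S1; ring.
Qed.

Lemma fdiffn_scrK2 n k t y :
  fdiffn k (fun y => scrK N p n 0 0 t y) y = scrK N p n 0 k t y.
Proof. by elim: k y => [|k IH] y //; rewrite fdiffnS !IH scrK_S2. Qed.

Lemma fdiffn_lin2 k (f g : R -> R) a b y :
  fdiffn k (fun y => a * f y - b * g y) y = a * fdiffn k f y - b * fdiffn k g y.
Proof. by elim: k y => [|k IH] y //; rewrite !fdiffnS !IH; ring. Qed.

Variables (lam mu : R) (j : nat).
Hypotheses (lam0 : 0 < lam) (mu0 : 0 < mu).

Lemma monic_coef (P : {poly R}) n : P \is monic -> size P = n.+1 ->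
  forall i, (n <= i)%N -> P`_i = (i == n)%:R.
Proof.
move=> M S i H.
case: (ltngtP n i) H => // H _.
- by rewrite nth_default ?S.
- by subst; move/monicP: M; rewrite lead_coefE S.
Qed.

Lemma normK_neq0 k : (k < N)%N -> normK N p k != 0.
Proof. by move=> H; rewrite gt_eqF ?normK_gt0. Qed.

Lemma KS_expand n P : (n <= N)%N -> isKS N p lam mu j n P -> forall t,
  P.[t] = K n t - lam * fdiffn j (horner P) 0 * scrK N p n 0 j t 0
                - mu * fdiffn j (horner P) NN * scrK N p n 0 j t NN.
Proof.
move=> nN [Pm [Ps Po]] t.
set u := fdiffn j (horner P) 0; set v := fdiffn j (horner P) NN.
have sq : (size (P - KP n)%R <= n)%N.
  have [KM [KS _]] := KP_monic n.
  by apply/leq_sizeP => i ni; rewrite coefB (monic_coef Pm Ps) // (monic_coef KM KS) // subrr.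
have [a Ha] := KP_basis (leqW nN) sq.
have hK : forall l : 'I_n, a l * normK N p l
     = - (lam * u * fdiffn j (K l) 0 + mu * v * fdiffn j (K l) NN).
  move=> l.
  have ln : (l < n)%N := ltn_ord l.
  have E1 : \sum_(x < N.+1) (P - KP n).[x%:R] * K l x%:R * w x = a l * normK N p l.
    under eq_bigr do rewrite Ha.
    transitivity (\sum_(x < N.+1) \sum_(k < n) a k * (K k x%:R * K l x%:R * w x)).
      by apply: eq_bigr => x _; rewrite !big_distrl; apply: eq_bigr => k _ /=; ring.
    rewrite exchange_big /= (bigD1 l) //= [X in _ + X]big1 ?addr0.
      by rewrite /normK mulr_sumr; apply: eq_bigr => x _; rewrite expr2.
    move=> k kl; have kn := ltn_ord k.
    rewrite -mulr_sumr Kr_orth ?mulr0 //. all: try lia.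

  have E2 : \sum_(x < N.+1) (P - KP n).[x%:R] * K l x%:R * w x
          = \sum_(x < N.+1) P.[x%:R] * K l x%:R * w x.
    under eq_bigr do rewrite hornerD hornerN KP_horner //.
    transitivity (\sum_(x < N.+1) P.[x%:R] * K l x%:R * w x
                - \sum_(x < N.+1) K n x%:R * K l x%:R * w x).
      by rewrite -sumrB; apply: eq_bigr => x _; ring.
    by rewrite (@Kr_orth n l) ?subr0 //; lia.
  have E3 := Po (KP l).
  have [_ [KS _]] := KP_monic l.
  rewrite KS in E3; have {E3} E3 := E3 ln.
  rewrite /sob /NR in E3.
  rewrite (@fdiffn_ext j (horner (KP l)) (K l)) in E3; last by move=> y; rewrite KP_horner //; lia.
  rewrite (@fdiffn_ext j (horner (KP l)) (K l) (fun y => KP_horner y _)) in E3; last by lia.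
  have E4 : \sum_(x < N.+1) P.[x%:R] * (KP l).[x%:R] * w x
          = \sum_(x < N.+1) P.[x%:R] * K l x%:R * w x.
    by apply: eq_bigr => x _; rewrite KP_horner //; lia.
  rewrite E4 in E3.
  rewrite -E1 E2; rewrite -/u -/v in E3.
  by apply/eqP; rewrite -subr_eq0 opprK addrA E3.
rewrite (_ : P = (P - KP n) + KP n); last by rewrite subrK.
rewrite hornerD Ha KP_horner // /scrK.
transitivity (K n t + \sum_(k < n) (- (lam * u) * (fdiffn 0 (K k) t * fdiffn j (K k) 0 / normK N p k)
                - mu * v * (fdiffn 0 (K k) t * fdiffn j (K k) NN / normK N p k))).
  rewrite addrC; congr (_ + _); apply: eq_bigr => k _.
  have hk := normK_neq0 (leq_trans (ltn_ord k) nN).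
  have -> : a k = - (lam * u * fdiffn j (K k) 0 + mu * v * fdiffn j (K k) NN) / normK N p k.
    by rewrite -hK mulfK.
  rewrite fdiffn0; field.
  by []. 
rewrite sumrB -!mulr_sumr; ring.
Qed.

Lemma scrK_sym n i a b : scrK N p n i i a b = scrK N p n i i b a.
Proof. by apply: eq_bigr => k _; ring. Qed.

Lemma delta_gt0 n : (n <= N)%N -> 0 < deltaS N p lam mu j n.
Proof.
move=> nN.
rewrite /deltaS /k00 /k0N /kN0 /kNN /NR (scrK_sym _ _ NN).
set a := scrK N p n j j 0 0; set b := scrK N p n j j 0 NN; set c := scrK N p n j j NN NN.
have hQ : forall s r : R, 0 <= s ^+ 2 * a + 2 * s * r * b + r ^+ 2 * c.
  move=> s r.
  have -> : s ^+ 2 * a + 2 * s * r * b + r ^+ 2 * c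
    = \sum_(k < n) (s * fdiffn j (K k) 0 + r * fdiffn j (K k) NN) ^+ 2 / normK N p k.
    rewrite /a /b /c /scrK !mulr_sumr -!big_split /=.
    by apply: eq_bigr => k _; ring.
  apply: sumr_ge0 => k _; apply: divr_ge0; first exact: sqr_ge0.
  by apply: ltW; apply: normK_gt0; move: (ltn_ord k); lia.
have ha : 0 <= a.
  have := hQ 1 0. rewrite !expr2 !(mul1r, mul0r, mulr0, addr0, mulr1). done.
have H := hQ (lam * b) (- (1 + lam * a)).
have hB : 0 < 1 + lam * a by rewrite ltr_pwDl // mulr_ge0 // ltW.
have H2 : 0 <= (1 + lam * a) * c - lam * b ^+ 2.
  have H3 : 0 <= (1 + lam * a) * ((1 + lam * a) * c - lam * b ^+ 2) - lam * b ^+ 2.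
    rewrite (_ : (1 + lam * a) * ((1 + lam * a) * c - lam * b ^+ 2) - lam * b ^+ 2
      = (lam * b) ^+ 2 * a + 2 * (lam * b) * (- (1 + lam * a)) * b + (- (1 + lam * a)) ^+ 2 * c) //.
    ring.
  have H4 : 0 <= lam * b ^+ 2 by rewrite mulr_ge0 ?sqr_ge0 ?ltW.
  have H5 : 0 <= (1 + lam * a) * ((1 + lam * a) * c - lam * b ^+ 2) by lra.
  by rewrite pmulr_rge0 in H5.
have H6 : 0 <= mu * ((1 + lam * a) * c - lam * b ^+ 2) by rewrite mulr_ge0 // ltW.
move: H6 hB; rewrite !expr2 => H6 hB; lra.
Qed.

Lemma KS_phi n P : (n <= N)%N -> isKS N p lam mu j n P ->
  fdiffn j (horner P) 0 = Phi1 N p lam mu j n /\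
  fdiffn j (horner P) NN = Phi2 N p lam mu j n.
Proof.
move=> nN H.
have E := KS_expand nN H.
set u := fdiffn j (horner P) 0 in E *; set v := fdiffn j (horner P) NN in E *.
have D : forall y, fdiffn j (horner P) y = fdiffn j (K n) y
     - (lam * u) * scrK N p n j j y 0 - (mu * v) * scrK N p n j j y NN.
  move=> y.
  by rewrite (@fdiffn_ext j (horner P) (fun t => K n t - (lam * u) * scrK N p n 0 j t 0
      - (mu * v) * scrK N p n 0 j t NN)) // fdiffn_comb.
have e0 : fdiffn j (K n) 0 = u + lam * u * scrK N p n j j 0 0 + mu * v * scrK N p n j j 0 NN.
  by have E0 := D 0; rewrite -/u in E0; rewrite {1}E0; ring.
have eN : fdiffn j (K n) NN = v + lam * u * scrK N p n j j NN 0 + mu * v * scrK N p n j j NN NN.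
  by have E0 := D NN; rewrite -/v in E0; rewrite {1}E0; ring.
have hd : deltaS N p lam mu j n != 0 by rewrite gt_eqF // delta_gt0.
split.
- rewrite /Phi1 -[u](mulfK hd); congr (_ / _).
  by rewrite /deltaS /d0 /dN /k00 /k0N /kN0 /kNN /NR e0 eN; ring.
- rewrite /Phi2 -[v](mulfK hd); congr (_ / _).
  by rewrite /deltaS /d0 /dN /k00 /k0N /kN0 /kNN /NR e0 eN; ring.
Qed.

Lemma CD_aux m t y : (m < N)%N ->
  (t - y) * scrK N p m.+1 0 0 t y
  = (K m.+1 t * K m y - K m t * K m.+1 y) / normK N p m.
Proof.
elim: m => [|m IH] mN.
  rewrite /scrK big_ord1 !fdiffn0 !Kr0 normK0.
  have e1 := Kr_rec t mN; have e2 := Kr_rec y mN.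
  rewrite /= !Kr0 /beta !mul0r !addr0 in e1.
  rewrite /= !Kr0 /beta !mul0r !addr0 in e2.
  have f1 : K 1 t = t * 1 - alpha N p 0 * 1 by rewrite e1; ring.
  have f2 : K 1 y = y * 1 - alpha N p 0 * 1 by rewrite e2; ring.
  rewrite f1 f2.
  rewrite invr1; ring.
rewrite /scrK big_ord_recr /= -/(scrK N p m.+1 0 0 t y) mulrDr IH; last by lia.
rewrite ?fdiffn0.
have e1 := Kr_rec t mN; have e2 := Kr_rec y mN.
rewrite /= in e1 e2.
rewrite (_ : K m.+2 t = t * K m.+1 t - alpha N p m.+1 * K m.+1 t - beta N p m.+1 * K m t);
  last by rewrite e1; ring.
rewrite (_ : K m.+2 y = y * K m.+1 y - alpha N p m.+1 * K m.+1 y - beta N p m.+1 * K m y);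
  last by rewrite e2; ring.
rewrite normK_rec //.
have h1 := normK_neq0 (ltnW mN).
have h2 : beta N p m.+1 != 0 by rewrite gt_eqF // beta_gt0 //; lia.
field; by rewrite h1 h2.
Qed.

Lemma CD n t y : (1 <= n)%N -> (n <= N)%N ->
  (t - y) * scrK N p n 0 0 t y = (K n t * K n.-1 y - K n.-1 t * K n y) / normK N p n.-1.
Proof. by case: n => [//|n] _ nN; rewrite CD_aux. Qed.

Lemma prod_rule (G : R -> R) t k y :
  fdiffn k (fun y => (t - y) * G y) y
  = (t - y - k%:R) * fdiffn k G y - k%:R * fdiffn k.-1 G y.
Proof.
elim: k y => [|k IH] y; first by rewrite /= ?fdiffn0; ring.
rewrite fdiffnS !IH fdiffnS.
case: k IH => [|k] IH; first by rewrite /= ?fdiffn0; ring.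
rewrite (fdiffnS k G y) -!natr1 /=; ring.
Qed.

Lemma ffallS (z : R) k : ffall z k.+1 = ffall z k * (z - k%:R).
Proof. by rewrite /ffall big_ord_recr. Qed.

Lemma Dj_formula (G F : R -> R) t (HF : forall y, (t - y) * G y = F y) k y :
  ffall (t - y) k.+1 != 0 ->
  fdiffn k G y = k`!%:R / ffall (t - y) k.+1 *
                 \sum_(i < k.+1) fdiffn i F y / i`!%:R * ffall (t - y) i.
Proof.
elim: k => [|k IH] hf.
  rewrite big_ord1 ?fdiffn0 -HF.
  rewrite ffallS in hf *; rewrite /ffall big_ord0 in hf *.
  rewrite fact0 /=; field; move: hf; rewrite ?mul1r subr0 => hf; neqt.
have hf' := hf; rewrite ffallS mulf_eq0 negb_or in hf'; case/andP: hf' => hf1 hf2.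
have P1 : fdiffn k.+1 F y = (t - y - k.+1%:R) * fdiffn k.+1 G y - k.+1%:R * fdiffn k G y.
  by rewrite -(fdiffn_ext k.+1 HF) prod_rule.
have e : fdiffn k.+1 G y = (fdiffn k.+1 F y + k.+1%:R * fdiffn k G y) / (t - y - k.+1%:R).
  by rewrite P1; field; neqt.
rewrite e (IH hf1) [X in _ = _ * X]big_ord_recr /= (ffallS (t - y) k.+1) factS natrM.
have h3 := fact_neq0 k.
field; neqt.
Qed.

Lemma scrK_CD n t y : (1 <= n)%N -> (n <= N)%N -> ffall (t - y) j.+1 != 0 ->
  scrK N p n 0 j t y = scrA N p j n t y * K n t + scrB N p j n t y * K n.-1 t.
Proof.
move=> n1 nN hf.
have hh : normK N p n.-1 != 0 by apply: normK_neq0; lia.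
rewrite -fdiffn_scrK2.
rewrite (@Dj_formula (fun y => scrK N p n 0 0 t y)
   (fun y => (K n t / normK N p n.-1) * K n.-1 y - (K n.-1 t / normK N p n.-1) * K n y) t) //;
  last by move=> z; rewrite CD //; field.
under eq_bigr do rewrite fdiffn_lin2.
rewrite /scrA /scrB.
set h := normK N p n.-1 in hh *; clearbody h.
rewrite !mulr_sumr !mulr_suml -big_split /=.
apply: eq_bigr => i _.
field; neqt.
Qed.

Lemma conn n P t : (1 <= n)%N -> (n <= N)%N -> isKS N p lam mu j n P -> nonpole N j t ->
  P.[t] = C1 N p lam mu j n t * K n t + D1 N p lam mu j n t * K n.-1 t.
Proof.
move=> n1 nN H [h0 hN].
rewrite (KS_expand nN H t).
have [-> ->] := KS_phi nN H.
rewrite /NR in hN.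
rewrite !scrK_CD // /C1 /D1 /NR; ring.
Qed.

Lemma GN m (c d : R -> R) t : (m.+2 <= N)%N ->
  t * ((c t * K m.+2 t + d t * K m.+1 t) - (c (t - 1) * K m.+2 (t - 1) + d (t - 1) * K m.+1 (t - 1)))
  = (t * bdiff c t + m.+2%:R * c (t - 1)
      - (m.+2%:R - 1) * p * (NN - m.+2%:R + 2) * d (t - 1) / beta N p m.+1) * K m.+2 t
  + (t * bdiff d t + m.+2%:R * p * (NN - m.+2%:R + 1) * c (t - 1)
      + (m.+2%:R - 1) * p * (NN - m.+2%:R + 2) * (t - alpha N p m.+1) * d (t - 1) / beta N p m.+1
      + (m.+2%:R - 1) * d (t - 1)) * K m.+1 t.
Proof.
move=> mN.
have s1 := Kr_struct m.+1 t.
have s2 := Kr_struct m t.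
have r := Kr_rec t (mN : (m.+1 < N)%N); rewrite /= in r.
have hb : beta N p m.+1 != 0 by rewrite gt_eqF // beta_gt0 //; lia.
have e1 : t * K m.+2 (t - 1) = t * K m.+2 t
   - (m.+2%:R * K m.+2 t + m.+2%:R * p * (NN - m.+2%:R + 1) * K m.+1 t) by rewrite -s1; ring.
have e2 : t * K m.+1 (t - 1) = t * K m.+1 t
   - (m.+1%:R * K m.+1 t + m.+1%:R * p * (NN - m.+1%:R + 1) * K m t) by rewrite -s2; ring.
have e3 : K m t = (t * K m.+1 t - K m.+2 t - alpha N p m.+1 * K m.+1 t) / beta N p m.+1.
  by rewrite r; field.
transitivity (c t * (t * K m.+2 t) - c (t - 1) * (t * K m.+2 (t - 1))
   + d t * (t * K m.+1 t) - d (t - 1) * (t * K m.+1 (t - 1))); first by ring.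
rewrite e1 e2 e3 /bdiff -!natr1.
field; exact: hb.
Qed.

Section Main.
Variables (n : nat) (P : {poly R}).
Hypotheses (n3 : (3 <= n)%N) (nN : (n <= N)%N) (HP : isKS N p lam mu j n P).

Local Notation C1n := (C1 N p lam mu j n).
Local Notation D1n := (D1 N p lam mu j n).
Local Notation C2n := (C2 N p lam mu j n).
Local Notation D2n := (D2 N p lam mu j n).
Local Notation E1n := (E1 N p lam mu j n).
Local Notation F1n := (F1 N p lam mu j n).
Local Notation E2n := (E2 N p lam mu j n).
Local Notation F2n := (F2 N p lam mu j n).
Local Notation Th := (Theta N p lam mu j n).
Local Notation La := (Lam N p lam mu j n).

Definition Qf (t : R) : R := C2n t * K n t + D2n t * K n.-1 t.

Lemma cP t : nonpole N j t -> P.[t] = C1n t * K n t + D1n t * K n.-1 t.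
Proof. by move=> H; apply: conn => //; lia. Qed.

Lemma nablaP t : nonpole N j t -> nonpole N j (t - 1) ->
  t * (P.[t] - P.[t - 1]) = E1n t * K n t + F1n t * K n.-1 t.
Proof.
move=> h1 h2; rewrite (cP h1) (cP h2).
case: n n3 nN HP => [|[|[|n']]] // _ nN' _.
by rewrite /E1 /F1 /NR /= GN.
Qed.

Lemma nablaQ t :
  t * (Qf t - Qf (t - 1)) = E2n t * K n t + F2n t * K n.-1 t.
Proof.
rewrite /Qf /F2 /E2 /D2 /C2.
case: n n3 nN HP => [|[|[|n']]] // _ nN' _ /=.
have hb : beta N p n'.+2 != 0 by rewrite gt_eqF // beta_gt0 //; lia.
have r : forall s, K n'.+1 s = (s * K n'.+2 s - K n'.+3 s - alpha N p n'.+2 * K n'.+2 s) / beta N p n'.+2.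
  by move=> s; rewrite (Kr_rec s (nN' : (n'.+2 < N)%N)) /=; field.
have G := @GN n' (C1 N p lam mu j n'.+2) (D1 N p lam mu j n'.+2) t (ltnW nN').
have QR : forall s, - (D1 N p lam mu j n'.+2 s / beta N p n'.+2) * K n'.+3 s
   + (C1 N p lam mu j n'.+2 s + - (D1 N p lam mu j n'.+2 s / beta N p n'.+2) * (alpha N p n'.+2 - s)) * K n'.+2 s
   = C1 N p lam mu j n'.+2 s * K n'.+2 s + D1 N p lam mu j n'.+2 s * K n'.+1 s.
  by move=> s; rewrite (r s); field.
rewrite !QR G (r t) /E1 /F1 /NR /=.
field; rewrite hb /= gt_eqF // beta_gt0 //; lia.
Qed.
Lemma I_rel t : nonpole N j t -> nonpole N j (t - 1) ->
  Th t * (P.[t] - P.[t - 1]) = - La t 2 1 * P.[t] + La t 1 1 * Qf t.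
Proof.
move=> h1 h2.
rewrite (_ : Th t * (P.[t] - P.[t - 1])
   = (C1n t * D2n t - C2n t * D1n t) * (t * (P.[t] - P.[t - 1]))); last by rewrite /Theta; ring.
rewrite nablaP // (cP h1) /Lam /Qf /Ei /Di /Fi /Ci /=; ring.
Qed.

Lemma II_rel t : nonpole N j t ->
  Th t * (Qf t - Qf (t - 1)) = La t 2 2 * P.[t] - La t 1 2 * Qf t.
Proof.
move=> h1.
rewrite (_ : Th t * (Qf t - Qf (t - 1))
   = (C1n t * D2n t - C2n t * D1n t) * (t * (Qf t - Qf (t - 1)))); last by rewrite /Theta; ring.
rewrite nablaQ // (cP h1) /Lam /Qf /Ei /Di /Fi /Ci /=; ring.
Qed.

Lemma main_sec x : nonpole N j (x + 1) -> nonpole N j x -> nonpole N j (x - 1) ->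
  La (x + 1) 1 1 != 0 ->
  Ftil N p lam mu j n x * fdiff (bdiff (horner P)) x
  + Gtil N p lam mu j n x * fdiff (horner P) x
  + Htil N p lam mu j n x * P.[x] = 0.
Proof.
move=> h1 h0 hm hA.
have h1' : nonpole N j (x + 1 - 1) by rewrite addrK.
have e1 := I_rel h1 h1'; rewrite addrK in e1.
have e2 := I_rel h0 hm.
have e2' : Th x * (P.[x] - P.[x - 1])
   = - La x 2 1 * (P.[x + 1] - (P.[x + 1] - P.[x])) + La x 1 1 * Qf x by rewrite e2; ring.
have e3 := II_rel h1; rewrite addrK in e3.
have F := final_alg hA e1 e2' e3.
apply: (etrans _ F).
rewrite /Ftil /Gtil /Htil /Fcal /Gcal /Hcal /fdiff /bdiff /= !addrK.
ring.
Qed.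
End Main.


End KrSec.

Theorem mainTheorem8 (R : realFieldType) (N : nat) (p lam mu : R) (j n : nat)
    (P : {poly R}) (x : R) :
  0 < p -> p < 1 -> 0 < lam -> 0 < mu -> (3 <= n)%N -> (n <= N)%N ->
  isKS N p lam mu j n P ->
  Theta_defined N j (x + 1) -> Theta_defined N j x ->
  Lam_defined N j (x + 1) -> Lam_defined N j x ->
  Lam N p lam mu j n (x + 1) 1 1 != 0 ->
  Ftil N p lam mu j n x * fdiff (bdiff (horner P)) x
  + Gtil N p lam mu j n x * fdiff (horner P) x
  + Htil N p lam mu j n x * P.[x] = 0.
Proof.
move=> p0 p1 l0 m0 n3 nN HP h1 h0 _ [_ hm] hA.
exact: (main_sec p0 p1 l0 m0 n3 nN HP h1 h0 hm hA).
Qed.
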